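(* Let $\phi:[0,1]\to[0,1]$ be a nondecreasing continuous function such that $\phi(x)>x$ for all $x\in(0,1)$, and let $V_\phi$ be the operator on $L_2[0,1]$ given by $(V_\phi f)(x)=\int_0^{\phi(x)}f(t)\,dt$. Then its Fredholm determinant is $$D_{V_\phi}(\lambda)=1+\sum_{n=1}^\infty(-1)^n\lambda^n\int_0^1\int_{\phi(t_1)}^1\cdots\int_{\phi(t_{n-1})}^1 dt_n\cdots dt_1 .$$
   Context: $V_\phi$ is the integral operator $(V_\phi f)(x)=\int_0^1 k(x,t)f(t)\,dt$ with bounded kernel $k(x,t)=1$ if $t\le\phi(x)$ and $k(x,t)=0$ if $t>\phi(x)$. For an integral operator $K$ on $L_2[0,1]$ with bounded kernel $k(x,t)$, its Fredholm determinant is $D_K(\lambda)=\sum_{n=0}^\infty\frac{(-1)^n}{n!}A_n\lambda^n$, where $A_0=1$ and for $n\ge1$, $A_n=\int_0^1\cdots\int_0^1\det\big(k(t_i,t_j)\big)_{i,j=1}^n\,dt_1\cdots dt_n$. *)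

(* Defs.v *)
From HB Require Import structures.
From mathcomp Require Import all_boot all_order all_algebra.
From mathcomp Require Import all_classical all_reals all_analysis.
Set Implicit Arguments. Unset Strict Implicit. Unset Printing Implicit Defensive.
Import Order.TTheory GRing.Theory Num.Theory.
Import numFieldNormedType.Exports.
Local Open Scope classical_set_scope.
Local Open Scope ring_scope.

Definition Vkernel (R : realType) (phi : R -> R) (x t : R) : R :=
  if t <= phi x then 1 else 0.

Definition scons (R : Type) (x : R) (t : nat -> R) : nat -> R :=
  fun k => if k is k'.+1 then t k' else x.

(* n-fold integral over [0,1]^n of F(t_0,...,t_{n-1}) (Lebesgue measure),
   written as iterated integrals, the outermost one in the variable t_0. *)
Fixpoint cube_int (R : realType) (n : nat) (F : (nat -> R) -> R) : R :=
  match n with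
  | 0 => F (fun _ => 0)
  | m.+1 => Rintegral (@lebesgue_measure R) `[0, 1]%classic
              (fun x => cube_int m (fun t => F (scons x t)))
  end.

Definition fredA (R : realType) (k : R -> R -> R) (n : nat) : R :=
  cube_int n (fun t => \det (\matrix_(i < n, j < n) k (t i) (t j))).

Definition fred_term (R : realType) (k : R -> R -> R) (lam : R) (n : nat) : R :=
  (-1) ^+ n / n`!%:R * fredA k n * lam ^+ n.

Fixpoint chain_int (R : realType) (phi : R -> R) (n : nat) (a : R) : R :=
  match n with
  | 0 => 1
  | m.+1 => Rintegral (@lebesgue_measure R) `[a, 1]%classic
              (fun s => chain_int phi m (phi s))
  end.

(* Main.v *)
Require Import Defs.
From HB Require Import structures.
From mathcomp Require Import all_boot all_order all_algebra.
From mathcomp Require Import all_classical all_reals all_analysis.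
From mathcomp Require Import measurable_realfun.
From mathcomp Require Import lra ring.
Import Order.TTheory GRing.Theory Num.Theory.
Import numFieldNormedType.Exports.
Local Open Scope classical_set_scope.
Local Open Scope ring_scope.

Module Part1.
Section Phi.
Variable R : realType.
Variable phi : R -> R.
Hypothesis phi_range : forall x : R, 0 <= x <= 1 -> 0 <= phi x <= 1.
Hypothesis phi_mono : forall x y : R, 0 <= x -> x <= y -> y <= 1 -> phi x <= phi y.
Hypothesis phi_gt : forall x : R, 0 < x < 1 -> x < phi x.

Lemma phi_ge y : 0 <= y <= 1 -> y <= phi y.
Proof.
move=> /andP[y0 y1].
have [->|yn0] := eqVneq y 0; first by have /andP[] := @phi_range 0 ltac:(lra).
have [y1e|yn1] := eqVneq y 1.
  rewrite y1e; have /andP[p0 p1] := @phi_range 1 ltac:(lra).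
  rewrite leNgt; apply/negP => ph1.
  set z := (phi 1 + 1) / 2.
  have hz : z < phi z by apply: phi_gt; rewrite /z; apply/andP; split; lra.
  have := @phi_mono z 1 ltac:(rewrite /z; lra) ltac:(rewrite /z; lra) ltac:(lra).
  rewrite /z in hz *; lra.
apply/ltW/phi_gt; apply/andP; split; rewrite lt_neqAle; apply/andP; split => //.
by rewrite eq_sym.
Qed.

Definition clamp (x : R) : R := Num.min (Num.max x 0) 1.
Definition ph (x : R) : R := phi (clamp x).

Lemma clamp01 x : 0 <= clamp x <= 1.
Proof.
rewrite /clamp; apply/andP; split.
  by rewrite le_min ler01 le_max lexx orbT.
by rewrite ge_min lexx orbT.
Qed.

Lemma clampE x : 0 <= x <= 1 -> clamp x = x.
Proof.
move=> /andP[x0 x1]; rewrite /clamp.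
by rewrite (max_l x0) (min_l x1).
Qed.

Lemma clamp_nd : nondecreasing_fun clamp.
Proof.
move=> x y xy; rewrite /clamp.
by apply: le_min2 => //; apply: le_max2.
Qed.

Lemma ph_nd : nondecreasing_fun ph.
Proof.
move=> x y xy; rewrite /ph; have /andP[? ?] := clamp01 x; have /andP[? ?] := clamp01 y.
by apply: phi_mono => //; exact: clamp_nd.
Qed.

Lemma ph_in01 x : 0 <= ph x <= 1.
Proof. exact/phi_range/clamp01. Qed.

Lemma phE x : 0 <= x <= 1 -> ph x = phi x.
Proof. by move=> hx; rewrite /ph clampE. Qed.

Lemma ph_ge x : 0 <= x <= 1 -> x <= ph x.
Proof. by move=> hx; rewrite phE //; exact: phi_ge. Qed.

Lemma mph : measurable_fun setT ph.
Proof. exact: nondecreasing_measurable ph_nd. Qed.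


Local Notation mu := (@lebesgue_measure R).

Fixpoint Ch (v : set R) (n : nat) (a : R) : \bar R :=
  match n with
  | 0 => 1%E
  | m.+1 => (\int[mu]_(s in v `&` `]a, +oo[) Ch v m (ph s))%E
  end.

Lemma Ch_ge0 v n a : (0 <= Ch v n a)%E.
Proof.
elim: n a => [|n IH] a /=; first by rewrite lee01.
by apply: integral_ge0 => s _; exact: IH.
Qed.

Lemma mset_lt d (T : measurableType d) (f g : T -> R) :
  measurable_fun setT f -> measurable_fun setT g -> measurable [set x | f x < g x].
Proof.
move=> mf mg.
have H := measurable_fun_ltr mf mg measurableT (Y:=[set true]) I.
by move: H; rewrite (@setTI T).
Qed.

Lemma mCh2 (W : set (R * R)) : measurable W -> forall n,
  measurable_fun setT (fun z : R * R => Ch [set s | W (z.1, s)] n z.2).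
Proof.
move=> mW; elim=> [|n IH]; first exact: measurable_cst.
have m11 : measurable_fun setT (fun p : (R * R) * R => p.1.1).
  exact: measurableT_comp measurable_fst measurable_fst.
have m12 : measurable_fun setT (fun p : (R * R) * R => p.1.2).
  exact: measurableT_comp measurable_snd measurable_fst.
have m2 : measurable_fun setT (fun p : (R * R) * R => p.2) := measurable_snd.
pose S := [set p : (R * R) * R | W (p.1.1, p.2) /\ p.1.2 < p.2].
pose h := fun z : R * R => Ch [set s | W (z.1, s)] n z.2.
pose g := fun p : (R * R) * R => ((\1_S p)%:E * h (p.1.1, ph p.2))%E.
have mS : measurable S.
  have -> : S = ((fun p : (R * R) * R => (p.1.1, p.2)) @^-1` W) `&` [set p | p.1.2 < p.2].
    by apply/seteqP; split => p.
  apply: measurableI.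
    have := measurable_fun_pair m11 m2 measurableT mW.
    by rewrite setTI.
  exact: mset_lt m12 m2.
have mg : measurable_fun setT g.
  apply: emeasurable_funM; first by apply/measurable_EFinP; exact: measurable_indic.
  apply: (measurableT_comp IH).
  exact: measurable_fun_pair m11 (measurableT_comp mph m2).
have g0 : forall p, (0 <= g p)%E.
  by move=> p; rewrite /g; apply: mule_ge0; [rewrite lee_fin indicE ler0n|exact: Ch_ge0].
have -> : (fun z : R * R => Ch [set s | W (z.1, s)] n.+1 z.2) = fubini_F mu g.
  apply/funext => z; rewrite /= /fubini_F [LHS]integral_mkcond; apply: eq_integral => s _.
  rewrite patchE /g indicE /h /=.
  have -> : ((z, s) \in S) = (s \in [set s | W (z.1, s)] `&` `]z.2, +oo[).
    apply/idP/idP => /set_mem [h1 h2]; apply/mem_set; split => //=.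
      by rewrite in_itv /= andbT.
    by move: h2; rewrite /= in_itv /= andbT.
  by case: ifP => _; rewrite ?mul1e ?mul0e.
exact: measurable_fun_fubini_tonelli_F.
Qed.


Lemma int_set_indic (D : set R) (f : R -> \bar R) :
  (\int[mu]_(x in D) f x = \int[mu]_x ((\1_D x)%:E * f x))%E.
Proof.
rewrite integral_mkcond; apply: eq_integral => x _.
by rewrite patchE indicE; case: ifP => _; rewrite ?mul1e ?mul0e.
Qed.

Lemma mslice1 (f : R * R -> \bar R) (x : R) : measurable_fun setT f ->
  measurable_fun setT (fun s => f (x, s)).
Proof.
move=> mf; apply: (measurableT_comp mf).
by apply: measurable_fun_pair => //; exact: measurable_cst.
Qed.

Lemma mslice2 (f : R * R -> \bar R) (s : R) : measurable_fun setT f ->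
  measurable_fun setT (fun x => f (x, s)).
Proof.
move=> mf; apply: (measurableT_comp mf).
by apply: measurable_fun_pair => //; exact: measurable_cst.
Qed.

Lemma mCh1 (v : set R) n : measurable v -> measurable_fun setT (fun b => Ch v n b).
Proof.
move=> mv.
have mW : measurable [set p : R * R | v p.2].
  have m2 : measurable_fun setT (fun p : R * R => p.2) := measurable_snd.
  have := m2 measurableT _ mv; by rewrite setTI.
exact: (mslice1 _ 0 (mCh2 _ mW n)).
Qed.

Lemma mCh1ph (v : set R) n : measurable v -> measurable_fun setT (fun s => Ch v n (ph s)).
Proof. move=> mv; exact: (measurableT_comp (mCh1 v n mv) mph). Qed.

Lemma mu01 : mu `[0, 1]%classic = 1%E.
Proof. by rewrite lebesgue_measure_itv /= lte_fin ltr01 sube0. Qed.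

Lemma Ch_le1 (v : set R) n a : measurable v -> v `<=` `[0, 1]%classic -> (Ch v n a <= 1)%E.
Proof.
move=> mv v01; elim: n a => [|n IH] a /=; first by rewrite lexx.
have mD : measurable (v `&` `]a, +oo[%classic) by apply: measurableI.
apply: (@le_trans _ _ (\int[mu]_(s in v `&` `]a, +oo[%classic) (cst 1%E) s)%E).
  apply: ge0_le_integral => //; try (by move=> s _; exact: Ch_ge0);
   try (by apply/measurable_funTS; exact: mCh1ph); try (by move=> s _; exact: IH).
rewrite integral_cst // mul1e -mu01.
apply: le_measure; rewrite ?inE //.
by move=> s [/v01].
Qed.


Lemma inb (T : Type) (b : T -> bool) x : (x \in [set y | b y]) = b x.
Proof. by apply/idP/idP => [/set_mem //|h]; exact: mem_set. Qed.

Lemma inpre (T U : Type) (f : T -> U) (A : set U) x :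
  (x \in [set y | A (f y)]) = (f x \in A).
Proof. by apply/idP/idP => [/set_mem h|/set_mem h]; exact: mem_set. Qed.

Lemma Ch_local (v v' : set R) n a : v `<=` `[0, 1]%classic ->
  (forall s, a < s -> (v s <-> v' s)) -> Ch v n a = Ch v' n a.
Proof.
move=> v01; elim: n a => [|n IH] a vv //=.
have vv2 : forall s, v' s -> a < s -> v s by move=> s h1 h2; apply/(vv s h2).
have -> : v `&` `]a, +oo[%classic = v' `&` `]a, +oo[%classic.
  apply/seteqP; split => s [h1 h2]; split => //; move: h2 => /=; rewrite in_itv /= andbT => h2.
    exact/(vv s h2).
  exact: vv2.
apply: eq_integral => s /set_mem [h1 h2]; move: h2 => /=; rewrite in_itv /= andbT => h2.
have s01 : 0 <= s <= 1 by have := v01 s (vv2 s h1 h2); rewrite /= in_itv.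
apply: IH => t ht; apply: vv.
by apply: (lt_le_trans h2); apply: (le_trans (ph_ge s s01)); exact: ltW.
Qed.

Definition sepset (x : R) : set R := [set y | ph x < y \/ ph y < x].

Lemma Ch_fin (v : set R) n a : measurable v -> v `<=` `[0, 1]%classic -> Ch v n a \is a fin_num.
Proof.
move=> mv v01; rewrite ge0_fin_numE ?Ch_ge0 //.
exact: (le_lt_trans (Ch_le1 v n a mv v01) (ltry 1)).
Qed.


Lemma in_sep x s : (s \in sepset x) = (ph x < s) || (ph s < x).
Proof. by apply/idP/idP => [/set_mem/= [->|->]//|/orP h]; [rewrite orbT|exact: mem_set]. Qed.

Lemma in_itvo (a s : R) : (s \in `]a, +oo[%classic) = (a < s).
Proof. by rewrite inb in_itv /= andbT. Qed.

Lemma mfst : measurable_fun setT (fun p : R * R => p.1).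
Proof. exact: measurable_fst. Qed.
Lemma msnd : measurable_fun setT (fun p : R * R => p.2).
Proof. exact: measurable_snd. Qed.

Lemma mpre1 (A : set R) : measurable A -> measurable [set p : R * R | A p.1].
Proof. by move=> mA; have := mfst measurableT _ mA; rewrite setTI. Qed.
Lemma mpre2 (A : set R) : measurable A -> measurable [set p : R * R | A p.2].
Proof. by move=> mA; have := msnd measurableT _ mA; rewrite setTI. Qed.

Lemma inpre1 (A : set R) (p : R * R) : (p \in [set q : R * R | A q.1]) = (p.1 \in A).
Proof. exact: inpre. Qed.
Lemma inpre2 (A : set R) (p : R * R) : (p \in [set q : R * R | A q.2]) = (p.2 \in A).
Proof. exact: inpre. Qed.

Lemma mlt12 : measurable [set p : R * R | ph p.1 < p.2].
Proof. exact: mset_lt (measurableT_comp mph mfst) msnd. Qed.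
Lemma mlt21 : measurable [set p : R * R | ph p.2 < p.1].
Proof. exact: mset_lt (measurableT_comp mph msnd) mfst. Qed.


Section Tid.
Variable u : set R.
Hypothesis mu_ : measurable u.
Hypothesis u01 : u `<=` `[0, 1]%classic.

Definition Wsep := [set p : R * R | u p.2 /\ (ph p.1 < p.2 \/ ph p.2 < p.1)].
Lemma mW : measurable Wsep.
Proof.
have -> : Wsep = [set p | u p.2] `&` ([set p | ph p.1 < p.2] `|` [set p | ph p.2 < p.1]).
  by apply/seteqP; split => p.
by apply: measurableI; [exact: mpre2|apply: measurableU; [exact: mlt12|exact: mlt21]].
Qed.

Lemma sep01 x : u `&` sepset x `<=` `[0, 1]%classic.
Proof. by move=> s [/u01]. Qed.

Lemma msep x : measurable (u `&` sepset x).
Proof.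
have := mW; move=> mW'.
have : measurable [set s | Wsep (x, s)].
  have h : measurable_fun setT (fun s : R => (x, s)).
    by apply: measurable_fun_pair => //; exact: measurable_cst.
  by have := h measurableT _ mW'; rewrite setTI.
by [].
Qed.

Lemma mChsep m b : measurable_fun setT (fun x => Ch (u `&` sepset x) m b).
Proof. exact: (mslice2 _ b (mCh2 Wsep mW m)). Qed.

Lemma Tid m : forall a,
  (\int[mu]_(x in u `&` `]a, +oo[%classic) Ch (u `&` sepset x) m a
   = (m.+1)%:R%:E * Ch u m.+1 a)%E.
Proof.
elim: m => [|m IH] a.
  by rewrite /= (_ : (0.+1)%:R = 1 :> R) // mul1e.
set Da := u `&` `]a, +oo[%classic.
have mDa : measurable Da by apply: measurableI.
set E1 := [set p : R * R | Da p.1] `&` [set p | Da p.2] `&` [set p | ph p.1 < p.2].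
set E2 := [set p : R * R | Da p.1] `&` [set p | Da p.2] `&` [set p | ph p.2 < p.1].
have mE1 : measurable E1 by apply: measurableI; [apply: measurableI; [exact: mpre1|exact: mpre2]|exact: mlt12].
have mE2 : measurable E2 by apply: measurableI; [apply: measurableI; [exact: mpre1|exact: mpre2]|exact: mlt21].
pose P1 := fun p : R * R => ((\1_E1 p)%:E * Ch u m (ph p.2))%E.
pose P2 := fun p : R * R => ((\1_E2 p)%:E * Ch (u `&` sepset p.1) m (ph p.2))%E.
have mP1 : measurable_fun setT P1.
  apply: emeasurable_funM; first by apply/measurable_EFinP; exact: measurable_indic.
  exact: (measurableT_comp (mCh1ph u m mu_) msnd).
have mP2 : measurable_fun setT P2.
  apply: emeasurable_funM; first by apply/measurable_EFinP; exact: measurable_indic.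
  exact: (measurableT_comp (mCh2 Wsep mW m) (measurable_fun_pair mfst (measurableT_comp mph msnd))).
have P10 p : (0 <= P1 p)%E by apply: mule_ge0; [rewrite lee_fin indicE ler0n|exact: Ch_ge0].
have P20 p : (0 <= P2 p)%E by apply: mule_ge0; [rewrite lee_fin indicE ler0n|exact: Ch_ge0].
have stepA : (\int[mu]_(x in Da) Ch (u `&` sepset x) m.+1 a =
    \int[mu]_x (\int[mu]_s P1 (x, s) + \int[mu]_s P2 (x, s)))%E.
  rewrite int_set_indic; apply: eq_integral => x _.
  rewrite indicE in_setI in_itvo.
  have [ux|ux] := boolP (x \in u); have [ax|ax] := boolP (a < x); rewrite /= ?mul0e;
  try (by rewrite !integral0_eq ?adde0 // => s _; rewrite /P1 /P2 indicE !in_setI ?inpre1 /= ?in_setI ?inb ?in_itv /= ?andbT ?(negbTE ux) ?(negbTE ax) ?andbF ?mul0e).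
  rewrite mul1e.
  rewrite -ge0_integralD //; try (by move=> s _; exact: P10); try (by move=> s _; exact: P20);
    try exact: (mslice1 _ x mP1); try exact: (mslice1 _ x mP2).
  rewrite int_set_indic; apply: eq_integral => s _.
  have x01 : 0 <= x <= 1 by have := u01 x (set_mem ux); rewrite /= in_itv.
  rewrite /P1 /P2 /= !indicE !in_setI ?inpre1 ?inpre2 ?inb /= ?in_sep ?in_setI ?in_itv /= ?andbT ?ux ?ax /=.
  have [us|us] := boolP (s \in u); rewrite /= ?mul0e ?adde0 //.
  have [as_|as_] := boolP (a < s); rewrite /= ?andbF ?mul0e ?adde0 //.
  have s01 : 0 <= s <= 1 by have := u01 s (set_mem us); rewrite /= in_itv.
  have hx1 := ph_ge x x01; have hs1 := ph_ge s s01.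
  have [c1|c1] := boolP (ph x < s); have [c2|c2] := boolP (ph s < x); rewrite /= ?mul0e ?mul1e ?adde0 ?add0e //.
  - by exfalso; move: c1 c2 hx1 hs1; lra.
  - apply: Ch_local; first exact: sep01.
    move=> t ht; split; first by case.
    move=> ut; split => //; left.
    apply: (le_lt_trans _ ht); apply: ph_nd; move: hx1 c1; lra.
have mF1 : measurable_fun setT (fun x => \int[mu]_s P1 (x, s))%E.
  exact: (@measurable_fun_fubini_tonelli_F _ _ _ _ _ mu P1 mP1 P10).
have mF2 : measurable_fun setT (fun x => \int[mu]_s P2 (x, s))%E.
  exact: (@measurable_fun_fubini_tonelli_F _ _ _ _ _ mu P2 mP2 P20).
rewrite stepA ge0_integralD //; try (by move=> x _; apply: integral_ge0 => s _; exact: P10);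
  try (by move=> x _; apply: integral_ge0 => s _; exact: P20).
have stepC : (\int[mu]_x \int[mu]_s P1 (x, s) = Ch u m.+2 a)%E.
  rewrite [RHS]/= [RHS]int_set_indic; apply: eq_integral => x _.
  rewrite indicE in_setI inb in_itv /= andbT.
  have [ux|ux] := boolP (x \in u); have [ax|ax] := boolP (a < x); rewrite /= ?mul0e;
  try (by rewrite !integral0_eq // => s _; rewrite /P1 indicE !in_setI ?inpre1 /= ?in_setI ?inb ?in_itv /= ?andbT ?(negbTE ux) ?(negbTE ax) ?andbF ?mul0e).
  rewrite mul1e /= [RHS]int_set_indic; apply: eq_integral => s _.
  have x01 : 0 <= x <= 1 by have := u01 x (set_mem ux); rewrite /= in_itv.
  have hx1 := ph_ge x x01.
  rewrite /P1 /= !indicE !in_setI ?inpre1 ?inpre2 ?inb /= ?in_setI ?inb ?in_itv /= ?andbT ?ux ?ax /=.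
  have [us|us] := boolP (s \in u) => //=.
  have [c1|c1] := boolP (ph x < s); rewrite ?andbT ?andbF //.
  by have -> : a < s by move: ax hx1 c1; lra.
have stepD : (\int[mu]_x \int[mu]_s P2 (x, s) = (m.+1%:R)%:E * Ch u m.+2 a)%E.
  rewrite (@fubini_tonelli _ _ _ _ _ mu mu P2) //.
  transitivity (\int[mu]_s ((m.+1%:R)%:E * ((\1_Da s)%:E * Ch u m.+1 (ph s))))%E.
    apply: eq_integral => s _.
    rewrite indicE in_setI inb in_itv /= andbT.
    have [us|us] := boolP (s \in u); have [as_|as_] := boolP (a < s); rewrite /= ?mul0e ?mule0;
    try (by rewrite !integral0_eq // => x _; rewrite /P2 indicE !in_setI ?inpre1 ?inpre2 /= ?in_setI ?inb ?in_itv /= ?andbT ?(negbTE us) ?(negbTE as_) ?andbF ?mul0e).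
    rewrite mul1e -IH [RHS]int_set_indic; apply: eq_integral => x _.
    have s01 : 0 <= s <= 1 by have := u01 s (set_mem us); rewrite /= in_itv.
    have hs1 := ph_ge s s01.
    rewrite /P2 /= !indicE !in_setI ?inpre1 ?inpre2 ?inb /= ?in_setI ?inb ?in_itv /= ?andbT ?us ?as_ /=.
    have [ux|ux] := boolP (x \in u) => //=.
    have [c1|c1] := boolP (ph s < x); rewrite ?andbT ?andbF //.
    by have -> : a < x by move: as_ hs1 c1; lra.
  rewrite ge0_integralZl //; try (by move=> s _; apply: mule_ge0; [rewrite lee_fin indicE ler0n|exact: Ch_ge0]);
  try (by apply: emeasurable_funM; [apply/measurable_EFinP; exact: measurable_indic|exact: mCh1ph]).
  by congr (_ * _)%E; rewrite [RHS]/= [RHS]int_set_indic.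
rewrite stepC stepD.
have fin := Ch_fin u m.+2 a mu_ u01.
rewrite -(fineK fin) -EFinM -EFinD; congr EFin.
by rewrite -[m.+2]addn1 natrD mulrDl mul1r addrC.
Qed.


End Tid.
End Phi.

End Part1.
Import Part1.

Module Part2.
Section Det.
Variable R : realType.
Variable phi : R -> R.
Hypothesis phige : forall y : R, 0 <= y <= 1 -> y <= phi y.

Definition sepb (x y : R) : bool := ~~ ((y <= phi x) && (x <= phi y)).

Lemma sepbC x y : sepb x y = sepb y x.
Proof. by rewrite /sepb andbC. Qed.

Definition sepall n (w : 'I_n -> R) : bool :=
  [forall i, forall j, (i != j) ==> sepb (w i) (w j)].
Arguments sepall {n}.

Lemma det_sep n (w : 'I_n -> R) : (forall i, 0 <= w i <= 1) ->
  \det (\matrix_(i, j) Vkernel phi (w i) (w j)) = (sepall w)%:R.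
Proof.
elim: n w => [|n IH] w w01.
  by rewrite det_mx00 (_ : sepall w = true) //; apply/forallP => -[].
case: (arg_maxP (i0 := ord0) (P := xpredT) w isT) => m _ Hm.
have wm1 := phige (w m) (w01 m).
set A := \matrix_(i, j) Vkernel phi (w i) (w j).
have [/existsP [i /andP [im hi]]|hno] := boolP [exists i, (i != m) && (w m <= phi (w i))].
  have -> : sepall w = false.
    apply/negbTE/negP => /forallP /(_ i) /forallP /(_ m); rewrite im /= /sepb hi /=.
    by rewrite (le_trans (Hm i isT) wm1).
  apply: (determinant_alternate im) => k; rewrite !mxE /Vkernel.
  by rewrite (le_trans (Hm k isT) hi) (le_trans (Hm k isT) wm1).
have hsep : forall i, i != m -> ~~ (w m <= phi (w i)).
  move=> i im; apply/negP => h; move/negP: hno; apply; apply/existsP; exists i.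
  by rewrite im h.
rewrite (expand_det_col _ m) (bigD1 m) //= big1 ?addr0; last first.
  move=> i; rewrite ?andTb => im; rewrite !mxE /Vkernel.
  by rewrite (negbTE (hsep i im)) mul0r.
rewrite !mxE /Vkernel wm1 mul1r /cofactor.
rewrite -signr_odd addnn odd_double /= expr0 mul1r.
have -> : row' m (col' m A) = \matrix_(i, j) Vkernel phi (w (lift m i)) (w (lift m j)).
  by apply/matrixP => i j; rewrite !mxE.
rewrite (IH (fun i => w (lift m i))) //; congr (_%:R); congr (nat_of_bool _).
have E : forall b1 b2 : bool, (b1 -> b2) -> (b2 -> b1) -> b1 = b2 by move=> [] [] // h1 h2; [move: (h1 isT)|move: (h2 isT)].
apply: E.
  move/forallP => H; apply/forallP => i; apply/forallP => j.
  case: (unliftP m i) => [i' ->|->]; case: (unliftP m j) => [j' ->|->]; apply/implyP => ij.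
  - have {}ij : i' != j' by apply: contra ij => /eqP ->.
    by move/forallP: (H i') => /(_ j') /implyP /(_ ij).
  - rewrite /sepb negb_and; apply/orP; left.
    by apply: hsep; rewrite eq_sym neq_lift.
  - rewrite sepbC /sepb negb_and; apply/orP; left.
    by apply: hsep; rewrite eq_sym neq_lift.
  - by rewrite eqxx in ij.
move/forallP => H; apply/forallP => i; apply/forallP => j; apply/implyP => ij.
have := H (lift m i) => /forallP /(_ (lift m j)) /implyP; apply.
by apply: contra ij => /eqP /lift_inj ->.
Qed.

End Det.

End Part2.
Import Part2.

Section Cube.
Variable R : realType.
Local Notation mu := (@lebesgue_measure R).

Lemma cube_ext n (F G : (nat -> R) -> R) :
  (forall t, (forall i, (i < n)%N -> 0 <= t i <= 1) -> F t = G t) ->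
  cube_int n F = cube_int n G.
Proof.
elim: n F G => [|n IH] F G H /=; first by apply: H.
apply: eq_Rintegral => x /set_mem; rewrite /= in_itv /= => hx.
apply: IH => t ht; apply: H => -[|i] hi //=.
exact: ht.
Qed.

Lemma cube0 n : cube_int n (fun _ : nat -> R => 0) = 0.
Proof.
elim: n => [|n IH] //=.
transitivity (Rintegral mu `[0, 1]%classic (fun _ => 0)).
  by apply: eq_Rintegral => x _; exact: IH.
by rewrite Rintegral_cst // mul0r.
Qed.

Lemma forallS m (P : 'I_m.+1 -> bool) :
  [forall i, P i] = P ord0 && [forall i : 'I_m, P (lift ord0 i)].
Proof.
apply/idP/idP.
  by move/forallP => H; rewrite H /=; apply/forallP => i.
move/andP => [H0 /forallP H]; apply/forallP => i.
by case: (unliftP ord0 i) => [j ->|->].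
Qed.

Lemma forall_scons m (P : R -> bool) x (t : nat -> R) :
  [forall i : 'I_m.+1, P (scons x t i)] = P x && [forall i : 'I_m, P (t i)].
Proof.
apply/idP/idP.
  move/forallP => H; apply/andP; split; first exact: (H ord0).
  by apply/forallP => i; have := H (lift ord0 i); rewrite lift0.
move/andP => [H0 /forallP H]; apply/forallP => i.
by case: (unliftP ord0 i) => [j ->|->] //; rewrite lift0; exact: H.
Qed.

End Cube.

Section Main.
Variable R : realType.
Variable phi : R -> R.
Hypothesis phi_range : forall x : R, 0 <= x <= 1 -> 0 <= phi x <= 1.
Hypothesis phi_mono : forall x y : R, 0 <= x -> x <= y -> y <= 1 -> phi x <= phi y.
Hypothesis phi_gt : forall x : R, 0 < x < 1 -> x < phi x.
Local Notation mu := (@lebesgue_measure R).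
Local Notation Ch := (Ch R phi).
Local Notation sepset := (sepset R phi).
Local Notation sepb := (Part2.sepb R phi).
Local Notation sepall := (Part2.sepall R phi _).
Local Notation ph := (ph R phi).

Let phige := phi_ge R phi phi_range phi_mono phi_gt.
Let msep' := msep R phi phi_mono.
Let mChsep' := mChsep R phi phi_mono.
Let Ch_fin' := Ch_fin R phi phi_mono.
Let Ch_le1' := Ch_le1 R phi phi_mono.
Let mCh1ph' := mCh1ph R phi phi_mono.

Definition Bint n (u : set R) (t : nat -> R) : R :=
  ([forall i : 'I_n, t i \in u] && sepall (fun i : 'I_n => t i))%:R.

Lemma sepallS m x (t : nat -> R) :
  sepall (fun i : 'I_m.+1 => scons x t i) =
  [forall j : 'I_m, sepb x (t j)] && sepall (fun i : 'I_m => t i).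
Proof.
have sconsL : forall j : 'I_m, scons x t (lift ord0 j) = t j by move=> j; rewrite lift0.
apply/idP/idP.
  move/forallP => H; apply/andP; split.
    apply/forallP => j.
    have := H ord0 => /forallP /(_ (lift ord0 j)) /implyP.
    by rewrite neq_lift sconsL => /(_ isT).
  apply/forallP => i; apply/forallP => j; apply/implyP => ij.
  have := H (lift ord0 i) => /forallP /(_ (lift ord0 j)) /implyP; rewrite !sconsL; apply.
  by apply: contra ij => /eqP /lift_inj ->.
move/andP => [/forallP H1 /forallP H2]; apply/forallP => i; apply/forallP => j.
case: (unliftP ord0 i) => [i' ->|->]; case: (unliftP ord0 j) => [j' ->|->];
  apply/implyP => ij; rewrite ?sconsL /=.
- have := H2 i' => /forallP /(_ j') /implyP; apply.
  by apply: contra ij => /eqP ->.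
- by rewrite Part2.sepbC; exact: H1.
- exact: H1.
- by rewrite eqxx in ij.
Qed.

Lemma BintS m u x t : 0 <= x <= 1 -> (forall i, (i < m)%N -> 0 <= t i <= 1) ->
  Bint m.+1 u (scons x t) = (x \in u)%:R * Bint m (u `&` sepset x) t.
Proof.
move=> x01 t01; rewrite /Bint (forall_scons _ _ (fun y => y \in u)) sepallS.
have -> : [forall i : 'I_m, t i \in u `&` sepset x] =
    [forall i : 'I_m, t i \in u] && [forall j : 'I_m, sepb x (t j)].
  apply/idP/idP.
    move/forallP => H; apply/andP; split; apply/forallP => i; have := H i;
      rewrite in_setI => /andP [h1 h2] //.
    move: h2; rewrite in_sep !phE //; last exact: t01.
    by rewrite /Part2.sepb negb_and -!ltNge.
  move/andP => [/forallP H1 /forallP H2]; apply/forallP => i.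
  rewrite in_setI H1 /= in_sep !phE //; last exact: t01.
  by have := H2 i; rewrite /Part2.sepb negb_and -!ltNge.
by case: (x \in u); rewrite /= ?mul1r ?mul0r ?andbA.
Qed.

Lemma Brec m u : cube_int m.+1 (Bint m.+1 u) =
  Rintegral mu `[0, 1]%classic (fun x => (x \in u)%:R * cube_int m (Bint m (u `&` sepset x))).
Proof.
rewrite /=; apply: eq_Rintegral => x /set_mem; rewrite /= in_itv /= => x01.
case: (boolP (x \in u)) => xu; rewrite ?mul1r ?mul0r.
  by apply: cube_ext => t ht; rewrite BintS // xu mul1r.
rewrite -(cube0 R m); apply: cube_ext => t ht; by rewrite BintS // (negbTE xu) mul0r.
Qed.

Lemma conv (u : set R) (h : R -> \bar R) (c : R) :
  measurable u -> u `<=` `[0, 1]%classic -> measurable_fun setT h ->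
  (forall x, 0 <= h x)%E -> (forall x, h x \is a fin_num) -> 0 <= c ->
  (\int[mu]_(x in u `&` `](-1)%R, +oo[%classic) h x)%E \is a fin_num ->
  Rintegral mu `[0, 1]%classic (fun x => (x \in u)%:R * (c * fine (h x))) =
  c * fine (\int[mu]_(x in u `&` `](-1)%R, +oo[%classic) h x)%E.
Proof.
move=> mu_ u01 mh h0 hfin c0 Ifin.
have mD : measurable (u `&` `](-1)%R, +oo[%classic) by apply: measurableI.
rewrite /Rintegral.
have -> : (\int[mu]_(x in `[0%R, 1%R]%classic) ((x \in u)%:R * (c * fine (h x)))%:E =
    c%:E * \int[mu]_(x in u `&` `](-1)%R, +oo[%classic) h x)%E.
  rewrite int_set_indic [X in (_ = _ * X)%E]int_set_indic -ge0_integralZl //;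
    try (by apply: emeasurable_funM => //; apply/measurable_EFinP; exact: measurable_indic);
    try (by move=> x _; apply: mule_ge0 => //; rewrite lee_fin indicE ler0n);
    try (by rewrite lee_fin).
  apply: eq_integral => x _; rewrite !indicE in_setI in_itvo.
  have [xu|xu] := boolP (x \in u).
    have /= := u01 x (set_mem xu); rewrite in_itv /= => x01.
    rewrite (_ : x \in `[0, 1]%classic) ?mul1e ?mul1r; last by apply/mem_set; rewrite /= in_itv.
    rewrite (_ : -1 < x); last by move: x01; lra.
    by rewrite /= mul1e EFinM fineK.
  by rewrite /= mul0r mul0e -EFinM mulr0 mule0.
by rewrite -[X in fine (_ * X)](fineK Ifin) -EFinM.
Qed.

Lemma B_Ch n (u : set R) : measurable u -> u `<=` `[0, 1]%classic ->
  cube_int n (Bint n u) = n`!%:R * fine (Ch u n (-1)).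
Proof.
elim: n u => [|m IH] u mu_ u01.
  rewrite /= /Bint (_ : [forall i : 'I_0, _] = true); last by apply/forallP => -[].
  by rewrite (_ : Part2.sepall _ _ _ _ = true) ?mul1r //; apply/forallP => -[].
rewrite Brec.
transitivity (Rintegral mu `[0, 1]%classic
   (fun x => (x \in u)%:R * (m`!%:R * fine (Ch (u `&` sepset x) m (-1))))).
  apply: eq_Rintegral => x _; rewrite IH //; [exact: msep'|exact: sep01].
rewrite conv //; try (by move=> x; exact: Ch_ge0);
  try (by move=> x; apply: Ch_fin' => //; [exact: msep'|exact: sep01]);
  try (by apply: mChsep').
rewrite (Tid R phi phi_range phi_mono phi_gt u mu_ u01 m (-1)).
rewrite fineM //; last exact: Ch_fin'.
  by rewrite /= mulrA -natrM factS mulnC.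
rewrite (Tid R phi phi_range phi_mono phi_gt u mu_ u01 m (-1)) fin_numM //.
exact: Ch_fin'.
Qed.

Lemma fredA_eq n : fredA (Vkernel phi) n = cube_int n (Bint n `[0, 1]%classic).
Proof.
rewrite /fredA; apply: cube_ext => t ht.
rewrite /Bint (_ : [forall i : 'I_n, t i \in `[0, 1]%classic] = true) /=; last first.
  by apply/forallP => i; apply/mem_set; rewrite /= in_itv; exact: ht.
by apply: (det_sep R phi phige n (fun i => t i)) => i; exact: ht.
Qed.

Lemma itv01 : `[0, 1]%classic `<=` (`[0, 1]%classic : set R).
Proof. by []. Qed.

Lemma m01 : measurable (`[0, 1]%classic : set R).
Proof. by []. Qed.

Lemma chain_inner m b (IH : forall b', 0 <= b' <= 1 -> chain_int phi m b' = fine (Ch `[0, 1]%classic m b')) :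
  0 <= b <= 1 ->
  Rintegral mu `[b, 1]%classic (fun s => chain_int phi m (phi s)) =
  fine (\int[mu]_(s in `[b, 1%R]%classic) Ch `[0%R, 1%R]%classic m (ph s))%E.
Proof.
move=> b01; rewrite /Rintegral; congr fine; apply: eq_integral => s /set_mem.
rewrite /= in_itv /= => /andP [bs s1].
have s01 : 0 <= s <= 1 by apply/andP; split => //; move: b01 bs; lra.
rewrite IH ?phE //; last exact: phi_range.
rewrite fineK //; exact: Ch_fin'.
Qed.

Lemma chain_Ch n b : 0 <= b <= 1 -> chain_int phi n b = fine (Ch `[0, 1]%classic n b).
Proof.
elim: n b => [|m IH] b b01 //.
rewrite [LHS]/= chain_inner //= -integral_itv_obnd_cbnd; last first.
  by apply/measurable_funTS; exact: mCh1ph'.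
congr fine; congr (integral _ _ _).
apply/seteqP; split => s /=; rewrite !in_itv /=.
  by move=> /andP [bs s1]; split; [apply/andP; split => //; move: b01 bs; lra|rewrite andbT].
by move=> [/andP [s0 s1]]; rewrite andbT => bs; rewrite bs s1.
Qed.

Lemma chain_top n : chain_int phi n 0 = fine (Ch `[0, 1]%classic n (-1)).
Proof.
case: n => [|m] //.
rewrite [LHS]/= (chain_inner m 0 (fun b' hb => chain_Ch m b' hb)); last by rewrite lexx ler01.
rewrite /=; congr fine; congr (integral _ _ _).
apply/seteqP; split => s /=; rewrite !in_itv /=.
  by move=> /andP [s0 s1]; split; [apply/andP|rewrite andbT; move: s0; lra].
by move=> [].
Qed.

Lemma fact_Ch n : forall (u : set R) a, measurable u -> u `<=` `[0, 1]%classic ->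
  ((n`!%:R)%:E * Ch u n a <= 1)%E.
Proof.
elim: n => [|m IH] u a mu_ u01.
  by rewrite /= mul1e.
have mD : measurable (u `&` `]a, +oo[%classic) by apply: measurableI.
rewrite factS mulnC natrM EFinM -muleA -(Tid R phi phi_range phi_mono phi_gt u mu_ u01 m a).
rewrite -ge0_integralZl //; try (by move=> x _; exact: Ch_ge0); try (by apply/measurable_funTS; exact: mChsep');
  try (by rewrite lee_fin).
apply: (@le_trans _ _ (\int[mu]_(x in u `&` `]a, +oo[%classic) (cst 1%E) x)%E).
  apply: ge0_le_integral => //; try (by move=> x _; apply: mule_ge0; [rewrite lee_fin|exact: Ch_ge0]);
   try (by apply: emeasurable_funM; [exact: measurable_cst|apply/measurable_funTS; exact: mChsep']).
  by move=> x _; apply: IH; [exact: msep'|exact: sep01].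
rewrite integral_cst // mul1e -(mu01 R).
apply: le_measure; rewrite ?inE //.
by move=> s [/u01].
Qed.

Local Notation c := (fun n => chain_int phi n 0).

Lemma coefE n : fredA (Vkernel phi) n = n`!%:R * c n.
Proof. by rewrite fredA_eq B_Ch // chain_top. Qed.

Lemma c_ge0 n : 0 <= c n.
Proof. by rewrite /= chain_top fine_ge0 // Ch_ge0. Qed.

Lemma c_le n : n`!%:R * c n <= 1.
Proof.
rewrite /= chain_top -lee_fin EFinM fineK; last exact: Ch_fin'.
exact: fact_Ch.
Qed.

Lemma fredE lam n : fred_term (Vkernel phi) lam n = (-1) ^+ n * lam ^+ n * c n.
Proof.
have hf : n`!%:R != 0 :> R by rewrite pnatr_eq0 -lt0n fact_gt0.
rewrite /fred_term coefE; field; exact: hf.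
Qed.

Lemma main_thm (lam : R) :
  exists l1 l2 : R,
    series (fred_term (Vkernel phi) lam) @ \oo --> l1 /\
    series (fun n => (-1) ^+ n.+1 * lam ^+ n.+1 * chain_int phi n.+1 0) @ \oo --> l2 /\
    l1 = 1 + l2.
Proof.
set v := fun n => (-1) ^+ n.+1 * lam ^+ n.+1 * chain_int phi n.+1 0.
have hv : cvgn (series v).
  apply: normed_cvg.
  apply: (@series_le_cvg _ _ (`|lam| *: exp_coeff `|lam|)).
  - by move=> n; rewrite /=.
  - by move=> n; rewrite /exp_coeff /= mulr_ge0 // divr_ge0 // exprn_ge0.
  - move=> n; rewrite /v /exp_coeff /= !normrM normrX normrN1 expr1n mul1r normrX.
    rewrite (ger0_norm (c_ge0 n.+1)).
    have hc : c n.+1 <= n`!%:R^-1.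
      rewrite -[X in _ <= X]div1r ler_pdivlMr ?ltr0n ?fact_gt0 //.
      apply: le_trans (c_le n.+1); rewrite mulrC ler_wpM2r ?c_ge0 // ler_nat leq_fact //.
    rewrite exprS -mulrA ler_wpM2l // ler_wpM2l ?exprn_ge0 //.
  - exact: is_cvg_seriesZ (is_cvg_series_exp_coeff _).
exists (1 + limn (series v)), (limn (series v)); split => //.
rewrite -cvg_shiftS.
have -> : (fun n => series (fred_term (Vkernel phi) lam) n.+1) = (fun n => 1 + series v n).
  apply/funext => n; rewrite /series /= big_nat_recl //= fredE /= mulr1 mul1r.
  rewrite expr0; congr (_ + _).
  by apply: eq_bigr => k _; rewrite fredE.
apply: cvgD; [exact: cvg_cst|exact: hv].
Qed.

End Main.

Theorem theorem3p2 (R : realType) (phi : R -> R)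
  (phi_range : forall x : R, 0 <= x <= 1 -> 0 <= phi x <= 1)
  (phi_mono : forall x y : R, 0 <= x -> x <= y -> y <= 1 -> phi x <= phi y)
  (phi_cont : {within `[0, 1], continuous phi})
  (phi_gt : forall x : R, 0 < x < 1 -> x < phi x)
  (lam : R) :
  exists l1 l2 : R,
    series (fred_term (Vkernel phi) lam) @ \oo --> l1 /\
    series (fun n => (-1) ^+ n.+1 * lam ^+ n.+1 * chain_int phi n.+1 0) @ \oo --> l2 /\
    l1 = 1 + l2.
Proof. exact: (main_thm R phi phi_range phi_mono phi_gt lam). Qed.
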